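(* Assume $G$ is connected with $n\ge2$. Let $0=\lambda_1<\lambda_2\le\dots\le\lambda_n$ be the eigenvalues of $\Delta$. Let $S\subset V$ with $\emptyset\ne S\ne V$ and $R_S:=\mathrm{vol}\,S/\mathrm{vol}\,V\ne\frac12$. Define $$\tau_\rho(S)=\lambda_n^{-1}\log\Big(1+\tfrac12d_-^{r/2}(\mathrm{vol}\,S)^{-1/2}\Big),$$ $$\tau_t(S)=\frac1{\lambda_2}\log\left(\frac{(\mathrm{vol}\,S)^{1/2}(\mathrm{vol}\,S^c)^{1/2}}{(\mathrm{vol}\,V)^{1/2}|R_S-\frac12|d_-^{r/2}}\right).$$ If $\dfrac{\lambda_2}{\lambda_n}<\dfrac{\log\sqrt2}{\log\frac32}$, then $\tau_\rho(S)<\tau_t(S)$.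
   Context: $G=(V,E)$ is a finite undirected weighted graph with vertex set $V=\{1,\dots,n\}$. The weights satisfy $\omega_{ij}=\omega_{ji}\ge0$, with $\omega_{ij}>0$ iff $\{i,j\}\in E$, and $\omega_{ii}=0$. The degrees are $d_i=\sum_j\omega_{ij}>0$, and $d_-=\min_id_i$. A parameter $r\in[0,1]$ is fixed. For $S\subset V$, $S^c=V\setminus S$ and $\mathrm{vol}\,S=\sum_{i\in S}d_i^r$. The graph Laplacian is $(\Delta u)_i=d_i^{-r}\sum_j\omega_{ij}(u_i-u_j)$, and its eigenvalues are those of the matrix $D^{-r}(D-A)$, where $A=(\omega_{ij})$ and $D=\mathrm{diag}(d_i)$. *)

(* Defs.v *)
From Stdlib Require Import Reals Lra Lia.
Open Scope R_scope.

(* Vertices are 0, ..., n-1 (the paper's 1, ..., n shifted by one).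
   A weighted graph is given by w : nat -> nat -> R (only i,j < n matter). *)

Fixpoint rsum (n : nat) (f : nat -> R) : R :=
  match n with
  | O => 0
  | S k => rsum k f + f k
  end.

Fixpoint rminf (n : nat) (f : nat -> R) : R :=
  match n with
  | O => 0
  | S O => f O
  | S ((S _) as k) => Rmin (rminf k f) (f k)
  end.

Definition weighted_graph (n : nat) (w : nat -> nat -> R) : Prop :=
  forall i j, (i < n)%nat -> (j < n)%nat ->
    w i j = w j i /\ 0 <= w i j /\ w i i = 0.

Definition deg (n : nat) (w : nat -> nat -> R) (i : nat) : R :=
  rsum n (fun j => w i j).

Definition dmin (n : nat) (w : nat -> nat -> R) : R := rminf n (deg n w).

Inductive reach (n : nat) (w : nat -> nat -> R) (i : nat) : nat -> Prop :=
  | reach_refl : reach n w i i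
  | reach_step : forall j k, reach n w i j -> (j < n)%nat -> (k < n)%nat ->
      0 < w j k -> reach n w i k.

Definition connected (n : nat) (w : nat -> nat -> R) : Prop :=
  forall i j, (i < n)%nat -> (j < n)%nat -> reach n w i j.

Definition vol (n : nat) (w : nat -> nat -> R) (r : R) (S : nat -> bool) : R :=
  rsum n (fun i => if S i then Rpower (deg n w i) r else 0).

Definition compl (S : nat -> bool) : nat -> bool := fun i => negb (S i).
Definition fullset : nat -> bool := fun _ => true.

Definition laplacian (n : nat) (w : nat -> nat -> R) (r : R) (u : nat -> R) (i : nat) : R :=
  Rpower (deg n w i) (- r) * rsum n (fun j => w i j * (u i - u j)).

(* lam 0 <= lam 1 <= ... <= lam (n-1) are the eigenvalues of Delta counted with
   multiplicity: they are sorted and there is a basis of R^n consisting of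
   eigenvectors phi 0, ..., phi (n-1) with Delta phi_k = lam k * phi_k.
   (Delta is self-adjoint for the weighted inner product sum_i d_i^r u_i v_i,
   hence diagonalizable, so this is exactly the spectrum with multiplicities.) *)
Definition laplacian_spectrum (n : nat) (w : nat -> nat -> R) (r : R) (lam : nat -> R) : Prop :=
  (forall i j, (i <= j)%nat -> (j < n)%nat -> lam i <= lam j) /\
  exists phi : nat -> nat -> R,
    (forall c : nat -> R,
       (forall i, (i < n)%nat -> rsum n (fun k => c k * phi k i) = 0) ->
       forall k, (k < n)%nat -> c k = 0) /\
    (forall k i, (k < n)%nat -> (i < n)%nat ->
       laplacian n w r (phi k) i = lam k * phi k i).

Definition tau_rho (n : nat) (w : nat -> nat -> R) (r : R) (lam : nat -> R)
  (S : nat -> bool) : R :=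
  / lam (n - 1)%nat *
    ln (1 + / 2 * Rpower (dmin n w) (r / 2) * Rpower (vol n w r S) (- (1 / 2))).

Definition RS (n : nat) (w : nat -> nat -> R) (r : R) (S : nat -> bool) : R :=
  vol n w r S / vol n w r fullset.

Definition tau_t (n : nat) (w : nat -> nat -> R) (r : R) (lam : nat -> R)
  (S : nat -> bool) : R :=
  / lam 1%nat *
    ln (Rpower (vol n w r S) (1 / 2) * Rpower (vol n w r (compl S)) (1 / 2) /
        (Rpower (vol n w r fullset) (1 / 2) * Rabs (RS n w r S - / 2) *
         Rpower (dmin n w) (r / 2))).

(* Main.v *)
Require Import Defs.
From Stdlib Require Import Reals Lra Lia.
Open Scope R_scope.

Lemma rsum_nonneg n f : (forall j, (j < n)%nat -> 0 <= f j) -> 0 <= rsum n f.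
Proof. induction n; simpl; intros H. lra. assert (0 <= f n) by (apply H; lia).
  assert (0 <= rsum n f) by (apply IHn; intros; apply H; lia). lra. Qed.

Lemma rsum_ge_term n f i : (forall j, (j < n)%nat -> 0 <= f j) -> (i < n)%nat -> f i <= rsum n f.
Proof. induction n; simpl; intros H Hi. lia.
  assert (0 <= f n) by (apply H; lia).
  assert (0 <= rsum n f) by (apply rsum_nonneg; intros; apply H; lia).
  destruct (Nat.eq_dec i n). subst; lra.
  assert (f i <= rsum n f) by (apply IHn; [intros; apply H; lia | lia]). lra. Qed.

Lemma rsum_zero_terms n f : (forall j, (j < n)%nat -> 0 <= f j) -> rsum n f = 0 ->
  forall j, (j < n)%nat -> f j = 0.
Proof. intros H H0 j Hj. assert (f j <= rsum n f) by (apply rsum_ge_term; auto).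
  assert (0 <= f j) by auto. lra. Qed.

Lemma rsum_plus n f g : rsum n (fun i => f i + g i) = rsum n f + rsum n g.
Proof. induction n; simpl. lra. rewrite IHn. lra. Qed.

Lemma rsum_scal n c f : rsum n (fun i => c * f i) = c * rsum n f.
Proof. induction n; simpl. lra. rewrite IHn. lra. Qed.

Lemma rsum_ext n f g : (forall i, (i < n)%nat -> f i = g i) -> rsum n f = rsum n g.
Proof. induction n; simpl; intros H. lra. rewrite IHn by (intros; apply H; lia).
  rewrite H by lia. lra. Qed.

Lemma rsum_two n f : (2 <= n)%nat -> (forall k, (2 <= k)%nat -> f k = 0) -> rsum n f = f 0%nat + f 1%nat.
Proof. intros Hn Hf. induction n. lia. destruct (Nat.eq_dec n 1).
  subst. simpl. lra. simpl. rewrite IHn by lia. rewrite (Hf n) by lia. lra. Qed.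

Lemma rminf_le m f i : (i < S m)%nat -> rminf (S m) f <= f i.
Proof. revert i. induction m; intros i Hi.
  simpl. assert (i = 0%nat) by lia. subst. lra.
  change (rminf (S (S m)) f) with (Rmin (rminf (S m) f) (f (S m))).
  destruct (Nat.eq_dec i (S m)). subst. apply Rmin_r.
  eapply Rle_trans. apply Rmin_l. apply IHm. lia. Qed.

Lemma rminf_att m f : exists i, (i < S m)%nat /\ rminf (S m) f = f i.
Proof. induction m. exists 0%nat. split; [lia|reflexivity].
  destruct IHm as [i [Hi E]].
  change (rminf (S (S m)) f) with (Rmin (rminf (S m) f) (f (S m))).
  unfold Rmin. destruct (Rle_dec _ _). exists i. split; [lia|auto].
  exists (S m). split; [lia|auto]. Qed.

Lemma argmax m (u : nat -> R) : exists i, (i < S m)%nat /\ forall j, (j < S m)%nat -> u j <= u i.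
Proof. induction m. exists 0%nat. split. lia. intros j Hj. assert (j=0%nat) by lia. subst; lra.
  destruct IHm as [i [Hi H]]. destruct (Rle_dec (u (S m)) (u i)).
  exists i. split. lia. intros j Hj. destruct (Nat.eq_dec j (S m)). subst; auto. apply H; lia.
  exists (S m). split. lia. intros j Hj. destruct (Nat.eq_dec j (S m)). subst; lra.
  assert (u j <= u i) by (apply H; lia). lra. Qed.

Lemma Rpower_pos x y : 0 < Rpower x y.
Proof. unfold Rpower. apply exp_pos. Qed.

Lemma const_max n w r lam u i0 : weighted_graph n w -> lam <= 0 ->
  (forall i, (i < n)%nat -> laplacian n w r u i = lam * u i) -> (i0 < n)%nat ->
  (forall j, (j < n)%nat -> u j <= u i0) -> 0 <= u i0 ->
  forall k, reach n w i0 k -> u k = u i0.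
Proof. intros Hw Hl He Hi0 Hmax Hpos k Hr. induction Hr. reflexivity.
  pose proof (He j H) as E. unfold laplacian in E.
  assert (Hnn : forall l, (l < n)%nat -> 0 <= w j l * (u j - u l)).
  { intros l Hl'. destruct (Hw j l H Hl') as [_ [h _]]. assert (u l <= u i0) by auto.
    apply Rmult_le_pos; lra. }
  assert (0 <= rsum n (fun l => w j l * (u j - u l))) by (apply rsum_nonneg; auto).
  pose proof (Rpower_pos (deg n w j) (-r)) as Hp.
  assert (Hz : rsum n (fun l => w j l * (u j - u l)) = 0) by nra.
  pose proof (rsum_zero_terms _ _ Hnn Hz k H0) as Hk. simpl in Hk.
  assert (u j - u k = 0). { apply (Rmult_eq_reg_l (w j k)). lra. lra. } lra. Qed.

Lemma eig_const n w r lam u : weighted_graph n w -> connected n w -> (1 <= n)%nat -> lam <= 0 ->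
  (forall i, (i < n)%nat -> laplacian n w r u i = lam * u i) ->
  exists c, forall k, (k < n)%nat -> u k = c.
Proof. intros Hw Hc Hn Hl He. destruct n as [|m]. lia.
  destruct (argmax m u) as [i0 [Hi0 Hm]].
  destruct (Rle_dec 0 (u i0)).
  - exists (u i0). intros k Hk. eapply const_max; eauto.
  - destruct (argmax m (fun x => - u x)) as [i1 [Hi1 Hm1]].
    assert (He' : forall i, (i < S m)%nat -> laplacian (S m) w r (fun x => - u x) i = lam * - u i).
    { intros i Hi. unfold laplacian. rewrite (rsum_ext _ _ (fun j => (-1) * (w i j * (u i - u j)))).
      rewrite rsum_scal. pose proof (He i Hi) as E. unfold laplacian in E. nra.
      intros; ring. }
    assert (0 <= - u i1). { assert (- u i0 <= - u i1) by (apply Hm1; auto). lra. }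
    exists (u i1). intros k Hk.
    assert (- u k = - u i1). { apply (const_max (S m) w r lam (fun x => - u x) i1); auto. }
    lra. Qed.

Lemma lam1_pos n w r lam : (2 <= n)%nat -> weighted_graph n w -> connected n w ->
  laplacian_spectrum n w r lam -> 0 < lam 1%nat.
Proof. intros Hn Hw Hc [Hord [phi [Hind Heig]]].
  destruct (Rlt_dec 0 (lam 1%nat)) as [h|h]. auto. exfalso.
  assert (H0 : lam 0%nat <= 0) by (pose proof (Hord 0%nat 1%nat ltac:(lia) ltac:(lia)); lra).
  destruct (eig_const n w r (lam 0%nat) (phi 0%nat)) as [a Ha];
    [auto|auto|lia|lra|intros; apply Heig; lia|].
  destruct (eig_const n w r (lam 1%nat) (phi 1%nat)) as [b Hb];
    [auto|auto|lia|lra|intros; apply Heig; lia|].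
  pose (c := fun k : nat => if Nat.eqb k 0 then b else if Nat.eqb k 1 then - a else 0).
  assert (Hc1 : c 1%nat = 0). { apply Hind. intros i Hi. rewrite rsum_two; auto.
    unfold c; simpl. rewrite Ha, Hb by auto. ring.
    intros k Hk. unfold c. destruct k as [|[|k]]; try lia. simpl. ring. lia. }
  unfold c in Hc1; simpl in Hc1.
  pose (c' := fun k : nat => if Nat.eqb k 0 then 1 else 0).
  assert (Hc0 : c' 0%nat = 0). { apply Hind. intros i Hi. rewrite rsum_two; auto.
    unfold c'; simpl. rewrite Ha by auto. lra.
    intros k Hk. unfold c'. destruct k as [|k]; try lia. simpl. ring. lia. }
  unfold c' in Hc0; simpl in Hc0. lra. Qed.

Theorem mainTheorem12
  (n : nat) (w : nat -> nat -> R) (r : R) (lam : nat -> R) (S : nat -> bool)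
  (Hn : (2 <= n)%nat)
  (Hw : weighted_graph n w)
  (Hdeg : forall i, (i < n)%nat -> 0 < deg n w i)
  (Hr : 0 <= r <= 1)
  (Hconn : connected n w)
  (Hspec : laplacian_spectrum n w r lam)
  (HSne : exists i, (i < n)%nat /\ S i = true)
  (HSnV : exists i, (i < n)%nat /\ S i = false)
  (HRS : RS n w r S <> / 2)
  (Hratio : lam 1%nat / lam (n - 1)%nat < ln (sqrt 2) / ln (3 / 2)) :
  tau_rho n w r lam S < tau_t n w r lam S.
Proof.
  assert (Hl1 : 0 < lam 1%nat) by (eapply lam1_pos; eauto).
  assert (Hln : lam 1%nat <= lam (n-1)%nat) by (destruct Hspec as [Ho _]; apply Ho; lia).
  set (D := dmin n w).
  assert (HD : 0 < D /\ forall i, (i < n)%nat -> D <= deg n w i).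
  { unfold D, dmin. destruct n as [|m]. lia. split.
    destruct (rminf_att m (deg (Datatypes.S m) w)) as [i [Hi E]]. rewrite E. auto.
    intros; apply rminf_le; auto. }
  destruct HD as [HD0 HDle].
  set (s := Rpower D (r/2)).
  assert (Hs : 0 < s) by apply Rpower_pos.
  assert (Hd : s * s = Rpower D r). { unfold s. rewrite <- Rpower_plus. f_equal. lra. }
  assert (Hterm : forall T : nat -> bool, forall i, (i < n)%nat -> T i = true -> s * s <= vol n w r T).
  { intros T i Hi HT. unfold vol. eapply Rle_trans.
    2: apply (rsum_ge_term _ _ i). cbv beta. rewrite HT, Hd. apply Rle_Rpower_l. lra. split; auto.
    intros j Hj. cbv beta. destruct (T j). left; apply Rpower_pos. lra. auto. }
  set (a := vol n w r S). set (b := vol n w r (compl S)). set (v := vol n w r fullset).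
  assert (Ha : s * s <= a). { destruct HSne as [i [Hi H]]. apply (Hterm S i); auto. }
  assert (Hb : s * s <= b). { destruct HSnV as [i [Hi H]]. apply (Hterm _ i); auto.
    unfold compl. rewrite H. reflexivity. }
  assert (Hv : v = a + b). { unfold v, a, b, vol. rewrite <- rsum_plus. apply rsum_ext.
    intros i _. unfold compl, fullset. destruct (S i); simpl; ring. }
  assert (Hsq : forall x, 0 < x -> Rpower x (1/2) = sqrt x).
  { intros. replace (1/2) with (/2) by lra. apply Rpower_sqrt; auto. }
  assert (Hs2 : s * s > 0) by nra.
  assert (Ha0 : 0 < a) by lra. assert (Hb0 : 0 < b) by lra. assert (Hv0 : 0 < v) by lra.
  set (A := 1 + / 2 * s * Rpower a (- (1 / 2))).
  assert (HA : 1 < A <= 3/2).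
  { unfold A. rewrite Rpower_Ropp, Hsq by auto.
    assert (sa : s <= sqrt a). { rewrite <- (sqrt_square s) by lra. apply sqrt_le_1_alt. auto. }
    pose proof (sqrt_lt_R0 a Ha0).
    assert (0 < s * / sqrt a <= 1). { split. apply Rmult_lt_0_compat; auto. apply Rinv_0_lt_compat; auto.
      apply (Rmult_le_reg_r (sqrt a)); auto. rewrite Rmult_assoc, Rinv_l by lra. lra. }
    lra. }
  set (B := Rpower a (1 / 2) * Rpower b (1 / 2) /
        (Rpower v (1 / 2) * Rabs (RS n w r S - / 2) * Rpower D (r / 2))).
  assert (HB : 2 < B).
  { unfold B. fold s. rewrite !Hsq by auto.
    unfold RS. fold a v.
    set (q := a / v - / 2).
    assert (Hq : q * (2 * v) = a - b). { unfold q. rewrite Hv. field. lra. }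
    assert (Hq0 : q <> 0). { unfold RS in HRS. fold a v in HRS. unfold q. lra. }
    set (t := Rabs q).
    assert (Ht : 0 < t) by (apply Rabs_pos_lt; auto).
    assert (Htt : t * t = q * q). { unfold t. rewrite <- Rabs_mult. apply Rabs_pos_eq. nra. }
    pose proof (sqrt_lt_R0 a Ha0). pose proof (sqrt_lt_R0 b Hb0). pose proof (sqrt_lt_R0 v Hv0).
    pose proof (sqrt_sqrt a ltac:(lra)). pose proof (sqrt_sqrt b ltac:(lra)). pose proof (sqrt_sqrt v ltac:(lra)).
    set (K := sqrt v * t * s). assert (HK : 0 < K) by (unfold K; repeat apply Rmult_lt_0_compat; auto).
    assert (key : (a - b) * (a - b) * (s * s) < a * b * (a + b)).
    { destruct (Rle_dec b a).
      - assert ((a-b)*(a-b) <= a * a) by nra.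
        assert (h1 : (s*s)*(a+b) <= b*(a+b)) by (apply Rmult_le_compat_r; lra).
        assert (h2 : a*(s*s) < (s*s)*(a+b)) by nra.
        assert (a*a*(s*s) < a * b * (a+b)) by nra. nra.
      - assert ((a-b)*(a-b) <= b * b) by nra.
        assert (h1 : (s*s)*(a+b) <= a*(a+b)) by (apply Rmult_le_compat_r; lra).
        assert (h2 : b*(s*s) < (s*s)*(a+b)) by nra.
        assert (b*b*(s*s) < a * b * (a+b)) by nra. nra. }
    assert (HK2 : (2*K) * (2*K) * v = (a - b) * (a - b) * (s * s)).
    { unfold K. rewrite <- Hq. replace (2 * (sqrt v * t * s) * (2 * (sqrt v * t * s)) * v)
        with (4 * (sqrt v * sqrt v) * (t * t) * (s * s) * v) by ring.
      rewrite Htt. rewrite H4. ring. }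
    assert ((2*K)*(2*K) < (sqrt a * sqrt b) * (sqrt a * sqrt b)).
    { apply (Rmult_lt_reg_r v); auto. rewrite HK2.
      replace (sqrt a * sqrt b * (sqrt a * sqrt b) * v) with ((sqrt a * sqrt a) * (sqrt b * sqrt b) * v) by ring.
      rewrite H2, H3, Hv. lra. }
    assert (2 * K < sqrt a * sqrt b).
    { destruct (Rlt_dec (2*K) (sqrt a * sqrt b)) as [hh|hh]. auto. exfalso.
      assert (0 <= sqrt a * sqrt b) by nra.
      assert (sqrt a * sqrt b * (sqrt a * sqrt b) <= 2*K*(2*K)) by (apply Rmult_le_compat; lra).
      lra. }
    fold K. unfold Rdiv. apply (Rmult_lt_reg_r K); auto.
    rewrite Rmult_assoc, Rinv_l by lra. lra. }
  assert (L3 : 0 < ln (3/2)). { rewrite <- ln_1. apply ln_increasing; lra. }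
  assert (Hs2lt : sqrt 2 < 2). { pose proof (sqrt_sqrt 2 ltac:(lra)). pose proof (sqrt_pos 2). nra. }
  assert (L2 : 0 < ln (sqrt 2)). { rewrite <- ln_1. apply ln_increasing. lra.
    pose proof (sqrt_sqrt 2 ltac:(lra)). pose proof (sqrt_pos 2). nra. }
  assert (HlnA : ln A <= ln (3/2)). { destruct (Rle_lt_or_eq_dec A (3/2)) as [h|h]. lra.
    left; apply ln_increasing; lra. rewrite h; lra. }
  assert (HlnB : ln (sqrt 2) < ln B). { apply ln_increasing. apply sqrt_lt_R0; lra. lra. }
  assert (Hlnn : 0 < lam (n-1)%nat) by lra.
  assert (Hcross : lam 1%nat * ln (3/2) < lam (n-1)%nat * ln (sqrt 2)).
  { apply (Rmult_lt_compat_r (lam (n-1)%nat * ln (3/2))) in Hratio.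
    2: apply Rmult_lt_0_compat; auto.
    replace (lam 1%nat / lam (n - 1)%nat * (lam (n - 1)%nat * ln (3 / 2))) with (lam 1%nat * ln (3/2)) in Hratio by (field; lra).
    replace (ln (sqrt 2) / ln (3 / 2) * (lam (n - 1)%nat * ln (3 / 2))) with (lam (n-1)%nat * ln (sqrt 2)) in Hratio by (field; lra).
    auto. }
  unfold tau_rho, tau_t. fold D. fold a. fold A. fold b v. fold B.
  apply Rle_lt_trans with (/ lam (n-1)%nat * ln (3/2)).
  apply Rmult_le_compat_l. left; apply Rinv_0_lt_compat; auto. auto.
  apply Rlt_trans with (/ lam 1%nat * ln (sqrt 2)).
  2: { apply Rmult_lt_compat_l. apply Rinv_0_lt_compat; auto. auto. }
  apply (Rmult_lt_reg_r (lam 1%nat * lam (n-1)%nat)). nra.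
  replace (/ lam (n - 1)%nat * ln (3 / 2) * (lam 1%nat * lam (n - 1)%nat)) with (lam 1%nat * ln (3/2)) by (field; lra).
  replace (/ lam 1%nat * ln (sqrt 2) * (lam 1%nat * lam (n - 1)%nat)) with (lam (n-1)%nat * ln (sqrt 2)) by (field; lra).
  auto.
Qed.
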